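(* For any non-negative integer $n$, \[\sum_{\sigma\in S_n}(-1)^{p_-(\sigma)}\,C\bigl(p_-(\sigma),\lfloor n/2\rfloor-p_-(\sigma)\bigr)=2^{2\lfloor n/2\rfloor},\] and for any even positive integer $n$, \[\sum_{\sigma\in S_n}(-1)^{p_+(\sigma)}\,C\bigl(p_+(\sigma),n/2-p_+(\sigma)\bigr)=0.\]
   Context: $S_n$ is the symmetric group on $\{1,\ldots,n\}$. For $\sigma\in S_n$, with the convention $\sigma(0)=0$, let $p_+(\sigma)=\#\{i\in\{1,\ldots,n-1\}:\sigma(i-1)<\sigma(i)>\sigma(i+1)\}$ and $p_-(\sigma)=\#\{i\in\{2,\ldots,n-1\}:\sigma(i-1)<\sigma(i)>\sigma(i+1)\}$. $C(p,q)=\frac{(2p)!(2q)!}{p!(p+q)!q!}$. *)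

(* Defs.v *)
From mathcomp Require Import all_boot all_order all_algebra all_fingroup.
Set Implicit Arguments. Unset Strict Implicit. Unset Printing Implicit Defensive.
Import GRing.Theory Num.Theory.

(* sv s i : the value sigma(i) for sigma in S_n acting on {1,...,n}, where
   s : 'S_n acts on {0,...,n-1}; sigma(i) = s(i-1)+1 for 1 <= i <= n,
   and the convention sigma(0) = 0 (also 0 outside 1..n, never used). *)
Definition sv (n : nat) (s : 'S_n) (i : nat) : nat :=
  if i is j.+1 then
    (if @insub nat (fun k => k < n) 'I_n j is Some k then (s k).+1 else 0)
  else 0.

Definition is_peak (n : nat) (s : 'S_n) (i : nat) : bool :=
  (sv s i.-1 < sv s i) && (sv s i.+1 < sv s i).

Definition p_plus (n : nat) (s : 'S_n) : nat :=
  count (is_peak s) (iota 1 (n - 1)).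

Definition p_minus (n : nat) (s : 'S_n) : nat :=
  count (is_peak s) (iota 2 (n - 2)).

Definition Csc (p q : nat) : rat :=
  (((p.*2)`! * (q.*2)`!)%:R / ((p`! * (p + q)`! * q`!)%:R))%R.

(* Main.v *)
Require Import Defs.
From mathcomp Require Import all_boot all_order all_algebra all_fingroup.
From mathcomp Require Import zify ring.
Import GRing.Theory Num.Theory.


Definition ins (j M : nat) (l : seq nat) := take j l ++ M :: drop j l.

Fixpoint pk (l : seq nat) : nat :=
  match l with
  | a :: ((b :: c :: _) as t) => ((a < b) && (c < b)) + pk t
  | _ => 0
  end.

Definition peak3 (a : nat) (t : seq nat) : bool :=
  match t with b :: c :: _ => (a < b) && (c < b) | _ => false end.

Lemma pk_cons a t : pk (a :: t) = peak3 a t + pk t.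
Proof. by case: t => [|b [|c u]]. Qed.

Lemma pk_bound_aux n : forall t a, size t <= n -> (pk (a :: t)).*2 <= size t.
Proof.
elim: n => [|n IH] [|b u] a Hs //.
rewrite pk_cons.
case: u Hs => [|u0 u'] Hs //.
rewrite [pk (b :: _)]pk_cons.
rewrite [peak3 a _]/=.
case Hc: ((a < b) && (u0 < b)).
  move/andP: Hc => [_ Hu0].
  have -> : peak3 b (u0 :: u') = false.
    by case: u' {Hs} => //= *; rewrite ltnNge ltnW.
  have := IH u' u0; rewrite [size _]/= in Hs *.
  move=> H; have {H} := H ltac:(lia). 
  move: (pk (u0 :: u')) => P. rewrite add0n add1n. rewrite -!muln2; lia.
have := IH (u0 :: u') b ltac:(move: Hs => /=; lia).
rewrite pk_cons [size _]/=. rewrite [size _]/= add0n.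
move: (pk (u0 :: u')) (peak3 b (u0 :: u')) => P []; rewrite ?add0n ?add1n -!muln2 /=; lia.
Qed.

Lemma pk_bound a t : (pk (a :: t)).*2 <= size t.
Proof. exact: pk_bound_aux (leqnn _). Qed.

Lemma pk_map_succ l : pk (map succn l) = pk l.
Proof.
elim: l => [|a t IH] //.
change (map succn (a :: t)) with (a.+1 :: map succn t).
rewrite !pk_cons IH; congr (_ + _).
by case: t {IH} => [|b [|c u]] //=; rewrite !ltnS.
Qed.

Lemma peak3_ins a b M u j : b < M ->
  peak3 a (b :: ins j.+1 M u) = peak3 a (b :: u).
Proof.
case: u => [|u0 u] hb; rewrite /ins /= //.
by rewrite [M < b]ltnNge (ltnW hb) andbF.
Qed.


Lemma ins0 M l : ins 0 M l = M :: l.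
Proof. by rewrite /ins take0 drop0. Qed.
Lemma insS j M x l : ins j.+1 M (x :: l) = x :: ins j M l.
Proof. by []. Qed.

Lemma peak3_max M l : all (fun x => x < M) l -> peak3 M l = false.
Proof. by case: l => [|x [|y l]] //= /andP[hx _]; rewrite ltnNge ltnW. Qed.

Lemma peak3_M b M u : b < M -> all (fun x => x < M) u ->
  peak3 b (M :: u) = (u != [::]).
Proof. by case: u => [|u0 u] //= hb /andP[h _]; rewrite hb h. Qed.

Lemma ce_excl a b u : peak3 a (b :: u) && peak3 b u = false.
Proof.
case: u => [|u0 [|u1 u]] //=; first by rewrite andbF.
apply/negbTE/negP => /andP[/andP[_ h1] /andP[h2 _]].
by move: (ltn_trans h1 h2); rewrite ltnn.
Qed.


Lemma insL (M : nat) (t : seq nat) : forall (G : nat -> rat) a, (a < M) ->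
  all (fun x => x < M) t ->
  (\sum_(0 <= j < (size t).+1) G (pk (a :: ins j M t)) =
  G (pk (a :: t)) * ((pk (a :: t)).*2.+1)%:R
  + G (pk (a :: t)).+1 * (size t - (pk (a :: t)).*2)%:R)%R.
Proof.
elim: t => [|b u IH] G a ha Ht.
  by rewrite big_nat1 ins0 /= mulr1 mulr0 addr0.
have Hbu := Ht.
have hb : (b < M) by case/andP: Ht.
have Hu : all (fun x => (x < M)) u by case/andP: Ht.
rewrite [size (b :: u)]/= big_nat_recl // big_nat_recl // ins0 insS ins0.
have E0 : pk (a :: M :: b :: u) = (pk (b :: u)).+1.
  by rewrite pk_cons [pk (M :: _)]pk_cons (@peak3_max M (b :: u) Hbu) /= ha hb.
have E2 : pk (b :: M :: u) = ((u != [::]) + pk u).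
  by rewrite pk_cons peak3_M // [pk (M :: u)]pk_cons (@peak3_max M u Hu).
have E1 : pk (a :: b :: M :: u) = ((u != [::]) + pk u).
  by rewrite pk_cons [peak3 a _]/= [M < b]ltnNge (ltnW hb) andbF add0n.
set c := peak3 a (b :: u).
have ES : (\sum_(0 <= j < size u) G (pk (a :: ins j.+2 M (b :: u)))
   = \sum_(0 <= j < size u) G (c + pk (b :: ins j.+1 M u))%N)%R.
  by apply: eq_bigr => j _; rewrite insS pk_cons peak3_ins.
rewrite ES.
have := IH (fun x => G (c + x)) b hb Hu.
rewrite big_nat_recl // ins0 E2 => IH'.
rewrite E0 E1.
set S := (\sum_(0 <= j < size u) _)%R in IH' *.
have HS : S = (G (c + pk (b :: u))%N * (pk (b :: u)).*2.+1%:R +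
     G (c + (pk (b :: u)).+1)%N * (size u - (pk (b :: u)).*2)%:R
     - G (c + ((u != [::]) + pk u))%N)%R by rewrite -IH'; ring.
rewrite HS; clear IH' HS ES S.
have hB1 := pk_bound b u. have hB2 := pk_bound a (b :: u).
have hx : c && peak3 b u = false by rewrite /c ce_excl.
rewrite [pk (a :: b :: u)]pk_cons -/c in hB2 *.
rewrite [pk (b :: u)]pk_cons in hB1 hB2 *.
have Hnil : u = [::] -> [/\ c = false, peak3 b u = false, pk u = 0 & size u = 0].
  by move=> Hu0; rewrite /c Hu0.
rewrite [size (b :: u)]/= in hB2.
move: Hnil hx hB1 hB2; clearbody c; move: c (peak3 b u) (pk u) (size u) => c e p s.
case: (eqVneq u [::]) => [-> /(_ erefl) [-> -> -> ->] _ _ _ | _ _]; rewrite ?eqxx /=.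
  rewrite ?add0n ?addn0 ?sub0n -!muln2 ?muln0 ?subn0. ring.
case: c; case: e => // _ hB1 hB2; rewrite ?add0n ?add1n ?addn0 ?addSn ?addnS;
  rewrite !natrB; try (rewrite -?muln2; lia); rewrite -!muln2.
all: ring.
Qed.


Fixpoint perms (n : nat) : seq (seq nat) :=
  if n is m.+1 then [seq ins j m l | l <- perms m, j <- index_iota 0 m.+1]
  else [:: [::]].

Lemma perms_S n : perms n.+1 = [seq ins j n l | l <- perms n, j <- index_iota 0 n.+1].
Proof. by []. Qed.

Lemma ins_perm j M l : perm_eq (ins j M l) (M :: l).
Proof.
rewrite /ins -[M :: drop j l]/([:: M] ++ drop j l) perm_catCA /=.
by rewrite cat_take_drop.
Qed.

Lemma iota_last n : perm_eq (iota 0 n.+1) (n :: iota 0 n).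
Proof. by rewrite -addn1 iotaD add0n /= cats1 perm_rcons. Qed.

Lemma perms_perm n l : l \in perms n -> perm_eq l (iota 0 n).
Proof.
elim: n l => [|n IH] l; first by rewrite inE => /eqP ->.
rewrite perms_S.
case/allpairsPdep => l' [j [Hl' _ ->]].
apply: (@perm_trans _ (n :: l')); first exact: ins_perm.
apply: (@perm_trans _ (n :: iota 0 n)); last by rewrite perm_sym iota_last.
by rewrite perm_cons IH.
Qed.

Lemma perm_in_perms n l : perm_eq l (iota 0 n) -> l \in perms n.
Proof.
elim: n l => [|n IH] l.
  by move/perm_size; case: l.
rewrite perms_S.
move=> Hp.
have Hn : n \in l by rewrite (perm_mem Hp) mem_iota /=.
set i := index n l.
have Hi : i < size l by rewrite index_mem.
set l' := take i l ++ drop i.+1 l.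
have El : l = ins i n l'.
  rewrite /ins /l' take_size_cat ?size_take ?Hi //.
  rewrite drop_size_cat ?size_take ?Hi //.
  by rewrite -{1}(cat_take_drop i l) (drop_nth n Hi) nth_index.
have Hp' : perm_eq l' (iota 0 n).
  rewrite -(perm_cons n); apply: (@perm_trans _ (iota 0 n.+1)); last exact: iota_last.
  apply: (@perm_trans _ l) => //; rewrite [X in perm_eq _ X]El perm_sym; exact: ins_perm.
apply/allpairsPdep; exists l', i; split=> //; first exact: IH.
rewrite mem_index_iota /=. by move: Hi; rewrite (perm_size Hp) size_iota.
Qed.

Lemma size_perms n : size (perms n) = n`!.
Proof.
elim: n => [|n IH] //.
rewrite perms_S size_allpairs_dep.
have -> : [seq size (index_iota 0 n.+1) | _ <- perms n] = nseq (size (perms n)) n.+1.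
  by elim: (perms n) => //= x s ->; rewrite size_iota.
by rewrite sumn_nseq IH factS mulnC.
Qed.

Definition lst n (s : 'S_n) : seq nat := [seq (s i : nat) | i <- enum 'I_n].
Arguments lst {n}.

Lemma lst_perm n (s : 'S_n) : perm_eq (lst s) (iota 0 n).
Proof.
rewrite /lst -val_enum_ord.
have E : [seq nat_of_ord (s i) | i <- enum 'I_n] = map val (map s (enum 'I_n)).
  by elim: (enum 'I_n) => //= x t ->.
rewrite E.
apply: perm_map; apply: uniq_perm; first by rewrite map_inj_uniq ?enum_uniq //; exact: perm_inj.
  exact: enum_uniq.
move=> x; rewrite mem_enum inE; apply/mapP; exists (s^-1 x)%g; first by rewrite mem_enum.
by rewrite permKV.
Qed.

Lemma lst_inj n : injective (@lst n).
Proof.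
move=> s1 s2 H; apply/permP => i; apply: val_inj.
have := congr1 (fun l => nth 0 l i) H.
rewrite /lst !(nth_map i) -?enumT ?size_enum_ord // nth_ord_enum; by move=> h; exact: h.
Qed.

Lemma sum_Sn n (H : seq nat -> rat) :
  (\sum_(s : 'S_n) H (lst s) = \sum_(l <- perms n) H l)%R.
Proof.
rewrite -(big_map (@lst n) xpredT H).
apply: perm_big.
have U : uniq [seq lst s | s <- index_enum 'S_n].
  by rewrite map_inj_uniq ?index_enum_uniq //; exact: lst_inj.
have Sub : {subset [seq lst s | s <- index_enum 'S_n] <= perms n}.
  by move=> l /mapP [s _ ->]; apply: perm_in_perms; exact: lst_perm.
have Sz : size (perms n) <= size [seq lst s | s <- index_enum 'S_n].
  by rewrite size_map [index_enum _]unlock -enumT -cardT card_Sn size_perms.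
have [_ Heq] := uniq_min_size U Sub Sz.
exact: (uniq_perm U (leq_size_uniq U Sub Sz) Heq).
Qed.


Definition F (h k : nat) : rat := ((-1) ^+ k * Csc k (h - k))%R.

Lemma Csc_k_mS k m : Csc k m.+1 =
  (((k.*2)`! * (m.*2)`!)%:R / (k`! * (k + m)`! * m`!)%:R
   * ((m.*2).+2 * (m.*2).+1)%:R / ((k+m).+1 * m.+1)%:R)%R.
Proof.
rewrite /Csc doubleS !factS addnS factS.
rewrite !natrM. field.
by rewrite -!natrD -!mulrS !pnatr_eq0 -!lt0n !fact_gt0.
Qed.

Lemma nzf n : ((n`!)%:R : rat) != 0%R.
Proof. by rewrite pnatr_eq0 -lt0n fact_gt0. Qed.
Lemma nzS n : ((n.+1)%:R : rat) != 0%R.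
Proof. by rewrite pnatr_eq0. Qed.

Lemma I1 k m : (F (k+m).+1 k * (k.*2.+2)%:R + F (k+m).+1 k.+1 * (m.*2)%:R
  = 4%:R * F (k+m) k)%R.
Proof.
rewrite /F /Csc.
have -> : ((k + m).+1 - k = m.+1)%N by lia.
have -> : ((k + m).+1 - k.+1 = m)%N by lia.
have -> : ((k + m) - k = m)%N by lia.
rewrite exprS addnS addSn !doubleS !factS -!muln2.
field.
by rewrite -!natrD -!mulrS !nzS !nzf.
Qed.

Lemma I2 k m : (F (k+m).+1 k * (k.*2.+2)%:R + F (k+m).+1 k.+1 * (m.*2.+1)%:R
  = F (k+m).+1 k)%R.
Proof.
rewrite /F /Csc.
have -> : ((k + m).+1 - k = m.+1)%N by lia.
have -> : ((k + m).+1 - k.+1 = m)%N by lia.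
rewrite exprS addnS addSn !doubleS !factS -!muln2.
field.
by rewrite -!natrD -!mulrS !nzS !nzf.
Qed.

Lemma I3 k m : (F (k+m).+1 k * (k.*2.+1)%:R + F (k+m).+1 k.+1 * (m.*2.+1)%:R
  = 0)%R.
Proof.
rewrite /F /Csc.
have -> : ((k + m).+1 - k = m.+1)%N by lia.
have -> : ((k + m).+1 - k.+1 = m)%N by lia.
rewrite exprS addnS addSn !doubleS !factS -!muln2.
field.
by rewrite -!natrD -!mulrS !nzS !nzf.
Qed.



Lemma sv_nth n (s : 'S_n) i : sv s i = nth 0 (0 :: map succn (lst s)) i.
Proof.
case: i => [|j] //=; rewrite /sv.
case: insubP => [k Hk Hv | Hk].
  rewrite (nth_map 0); last by rewrite /lst size_map -cardT card_ord.
  rewrite /lst (nth_map k); last by rewrite -cardT card_ord.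
  by rewrite -Hv nth_ord_enum.
by rewrite nth_default // size_map /lst size_map -cardT card_ord leqNgt.
Qed.

Definition pkat (w : seq nat) (i : nat) : bool :=
  (nth 0 w i.-1 < nth 0 w i) && (nth 0 w i.+1 < nth 0 w i).

Lemma count_shift a w m :
  count (pkat (a :: w)) (iota 2 m) = count (pkat w) (iota 1 m).
Proof.
rewrite -[2]/(1 + 1) iotaDl count_map.
apply: eq_in_count => i; rewrite mem_iota => /andP[hi _].
by case: i hi.
Qed.

Lemma pk_count w : pk w = count (pkat w) (iota 1 (size w - 2)).
Proof.
elim: w => [|a t IH] //.
rewrite pk_cons IH.
case: t IH => [|b [|c u]] IH //.
have -> : (size [:: a, b, c & u] - 2 = (size u).+1)%N by rewrite /=; lia.
rewrite /= count_shift.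
by rewrite subn2.
Qed.

Lemma size_lst n (s : 'S_n) : size (lst s) = n.
Proof. by rewrite /lst size_map -cardT card_ord. Qed.

Lemma is_peak_pkat n (s : 'S_n) : is_peak s =1 pkat (0 :: map succn (lst s)).
Proof. by move=> i; rewrite /is_peak /pkat !sv_nth. Qed.

Lemma p_minus_pk n (s : 'S_n) : p_minus s = pk (lst s).
Proof.
rewrite /p_minus (eq_count (@is_peak_pkat n s)) count_shift.
by rewrite -pk_map_succ pk_count size_map {2}/lst size_map -cardT card_ord.
Qed.

Lemma p_plus_pk n (s : 'S_n) : p_plus s = pk (0 :: map succn (lst s)).
Proof.
rewrite /p_plus (eq_count (@is_peak_pkat n s)) pk_count /= size_map {1}/lst size_map -cardT card_ord.
by rewrite subSS subn1.
Qed.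

Lemma perms_shape n l : l \in perms n ->
  size l = n /\ all (fun x => x < n) l.
Proof.
move/perms_perm => Hp; split; first by rewrite (perm_size Hp) size_iota.
by apply/allP => x; rewrite (perm_mem Hp) mem_iota.
Qed.

Lemma rec_int n (G : nat -> rat) :
  (\sum_(l <- perms n.+2) G (pk l) =
   \sum_(l <- perms n.+1) (G (pk l) * ((pk l).*2.+2)%:R
                           + G (pk l).+1 * (n - (pk l).*2)%:R))%R.
Proof.
rewrite perms_S big_allpairs_dep.
apply: eq_big_seq => l /perms_shape [Hs Ha].
case: l Hs Ha => [|a t] //= [Hs] /andP[ha Ht].
rewrite big_nat_recl // ins0.
have -> : (\sum_(0 <= i < n.+1) G (pk (ins i.+1 n.+1 (a :: t))) =
          \sum_(0 <= i < (size t).+1) G (pk (a :: ins i n.+1 t)))%R by rewrite Hs.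
rewrite insL // pk_cons peak3_max /= ?ha ?Ht // Hs.
rewrite -!muln2; ring.
Qed.

Lemma rec_left n (G : nat -> rat) :
  (\sum_(l <- perms n.+1) G (pk (0 :: map succn l)) =
   \sum_(l <- perms n) (G (pk (0 :: map succn l)) * ((pk (0 :: map succn l)).*2.+1)%:R
                  + G (pk (0 :: map succn l)).+1 * (n - (pk (0 :: map succn l)).*2)%:R))%R.
Proof.
rewrite perms_S big_allpairs_dep.
apply: eq_big_seq => l /perms_shape [Hs Ha].
have -> : (\sum_(j <- index_iota 0 n.+1) G (pk (0 :: map succn (ins j n l))) =
  \sum_(0 <= j < (size (map succn l)).+1) G (pk (0 :: ins j n.+1 (map succn l))))%R.
  rewrite size_map Hs; apply: eq_bigr => j _.
  by rewrite /ins map_cat map_take /= map_drop.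
rewrite insL // ?size_map ?Hs //.
by rewrite all_map; apply: sub_all Ha => x /=.
Qed.


Lemma pk_bound_perm n l : l \in perms n.+1 -> (pk l).*2 <= n.
Proof.
move/perms_shape => [Hs _]; case: l Hs => [|a t] //= [Hs].
by rewrite -Hs pk_bound.
Qed.

Lemma pk_bound_left n l : l \in perms n -> (pk (0 :: map succn l)).*2 <= n.
Proof.
move/perms_shape => [Hs _].
by rewrite -{1}Hs -(size_map succn) pk_bound.
Qed.

Lemma Q1Q2 h : (\sum_(l <- perms h.*2.+1) F h (pk l) = (4 ^ h)%:R ->
  \sum_(l <- perms h.*2.+2) F h.+1 (pk l) = (4 ^ h.+1)%:R)%R.
Proof.
move=> IH; rewrite rec_int.
rewrite (eq_big_seq (fun l => 4%:R * F h (pk l))%R).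
  by rewrite -mulr_sumr IH expnS natrM.
move=> l /pk_bound_perm Hk.
have [m Hm] : exists m, h = pk l + m by exists (h - pk l); lia.
rewrite Hm (_ : ((pk l + m).*2 - (pk l).*2 = m.*2)%N); last by rewrite -!muln2; lia.
exact: I1.
Qed.

Lemma Q2Q1 h : (\sum_(l <- perms h.*2.+2) F h.+1 (pk l) = (4 ^ h.+1)%:R ->
  \sum_(l <- perms h.+1.*2.+1) F h.+1 (pk l) = (4 ^ h.+1)%:R)%R.
Proof.
move=> IH; rewrite doubleS rec_int -IH.
apply: eq_big_seq => l /pk_bound_perm Hk.
have [m Hm] : exists m, h = pk l + m by exists (h - pk l); move: Hk; rewrite -!muln2; lia.
rewrite Hm (_ : ((pk l + m).*2.+1 - (pk l).*2 = m.*2.+1)%N); last by rewrite -!muln2; lia.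
exact: I2.
Qed.

Lemma Q1all h : (\sum_(l <- perms h.*2.+1) F h (pk l) = (4 ^ h)%:R)%R.
Proof.
elim: h => [|h IH].
  by rewrite /= big_cons big_nil /F /Csc /= addr0 mul1r divr1.
apply: Q2Q1; exact: Q1Q2.
Qed.

Lemma Q3 h : (\sum_(l <- perms h.*2.+2) F h.+1 (pk (0 :: map succn l)) = 0)%R.
Proof.
rewrite rec_left big1_seq // => l /andP[_ /pk_bound_left Hk].
have [m Hm] : exists m, h = pk (0 :: map succn l) + m.
  by exists (h - pk (0 :: map succn l)); move: Hk; rewrite -!muln2; lia.
rewrite Hm (_ : ((pk (0 :: map succn l) + m).*2.+1 - (pk (0 :: map succn l)).*2 = m.*2.+1)%N); last by rewrite -!muln2; lia.
exact: I3.
Qed.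

Local Open Scope ring_scope.

Theorem corollary7p2 :
  (forall n : nat,
      \sum_(s : 'S_n) (-1) ^+ (p_minus s) * Csc (p_minus s) (n./2 - p_minus s)%N
      = (2 ^ (2 * n./2))%N%:R :> rat)
  /\
  (forall n : nat, (0 < n)%N -> ~~ odd n ->
      \sum_(s : 'S_n) (-1) ^+ (p_plus s) * Csc (p_plus s) (n./2 - p_plus s)%N
      = 0 :> rat).
Proof.
split.
  move=> n.
  transitivity (\sum_(s : 'S_n) F n./2 (pk (lst s))).
    by apply: eq_bigr => s _; rewrite p_minus_pk.
  have := sum_Sn n (fun l => F n./2 (pk l)); rewrite /= => ->.
  rewrite expnM (_ : (2 ^ 2 = 4)%N) //.
  have [h [-> | ->]] : exists h, n = h.*2 \/ n = h.*2.+1.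
    exists n./2; have E := odd_double_half n; case: (odd n) E => /= E; [right | left]; by rewrite -{1}E ?add1n ?add0n.
    case: h => [|h].
      by rewrite /= big_cons big_nil /F /Csc /= addr0 mul1r divr1.
    by rewrite doubleK doubleS Q1Q2 // Q1all.
  by rewrite -[h.*2.+1]/(true + h.*2)%N half_bit_double Q1all.
move=> n n0 ev.
transitivity (\sum_(s : 'S_n) F n./2 (pk (0 :: map succn (lst s)))).
  by apply: eq_bigr => s _; rewrite p_plus_pk.
have := sum_Sn n (fun l => F n./2 (pk (0 :: map succn l))); rewrite /= => ->.
move: (odd_double_half n); rewrite (negbTE ev) add0n => En.
rewrite -En in n0 *; move: n0.
case: (n./2) => [|h] // _.
by rewrite doubleK doubleS Q3.
Qed.
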